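(* Let $N_w,N_d,L\ge 1$ be integers, $\sigma_i^2>0$, $N_0>0$, and let $\tilde A_{k,j}>0$ for $k\in[N_w]$, $j\in[N_d]$. Let the location $X$ be uniformly distributed a priori on $[L]$, and let the captured image $\mathbf{Y}=(Y_{k,j})$ and the global map sections $\mathbf{Y}^l=(Y^l_{k,j})$, $l\in[L]$, follow the Gaussian tile model described in the context. Then the maximum likelihood location estimate (the $\ell\in[L]$ maximizing $\Pr(X=\ell\mid \mathbf{Y}=\mathbf{y},\ \mathbf{Y}^l=\mathbf{y}^l,\ l\in[L])$) is $$\hat{\ell}=\operatorname*{arg\,min}_{\ell\in[L]}\ \sum_{k=1}^{N_w}\sum_{j=1}^{N_d}\frac{(y^\ell_{k,j}-y_{k,j})^2}{2\sigma_i^2+N_0/\tilde A_{k,j}}.$$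
   Context: Setting (vision-based vehicle localization by matching a captured road image to one of $L$ sections of a global map). Each image is a matrix of $N_w\times N_d$ tiles. The captured image is $\mathbf{Y}=\mathbf{A}+\mathbf{N}^i+\mathbf{N}^s$, i.e. $Y_{k,j}=a_{k,j}+n^i_{k,j}+n^s_{k,j}$, where $a_{k,j}$ is the underlying road signal, $n^i_{k,j}$ is intrinsic (environmental) noise, zero-mean Gaussian with variance $\sigma_i^2$, and $n^s_{k,j}$ is sensor noise, zero-mean Gaussian with variance $(\sigma^s_{k,j})^2=N_0/\tilde A_{k,j}$; here $\tilde A_{k,j}$ is the area of the projection of tile $(k,j)$ of the road onto the focal plane of the camera (for square road tiles of side $s$, camera height $h$, depression angle $\theta$, focal length $f$: $\tilde A_{k,j}=\frac{s}{2\cos\theta}\big[\frac{f^2h}{((j-1)s\cos\theta+h\sin\theta)^2}-\frac{f^2h}{(js\cos\theta+h\sin\theta)^2}\big]$). The $\ell$-th map section is $\mathbf{Y}^\ell=\mathbf{A}^\ell+\mathbf{N}^{i,\ell}$ with $n^{i,\ell}_{k,j}$ zero-mean Gaussian of variance $\sigma_i^2$; if the true location is $\ell$ then $\mathbf{A}=\mathbf{A}^\ell$. All noise terms are independent across tiles and of one another. Conditional on $X=\ell$, the captured image depends on the map only through $\mathbf{Y}^\ell$, and given $Y^\ell_{k,j}=y^\ell_{k,j}$ the underlying signal is modeled as $a^\ell_{k,j}\sim\mathcal N(y^\ell_{k,j},\sigma_i^2)$, independently across tiles. *)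

(* Defs.v *)
From HB Require Import structures.
From mathcomp Require Import all_boot all_order all_algebra.
From mathcomp Require Import all_classical all_reals all_analysis.
Set Implicit Arguments. Unset Strict Implicit. Unset Printing Implicit Defensive.
Import Order.TTheory GRing.Theory Num.Theory.
Local Open Scope ring_scope.

Section Model.
Context {R : realType}.

(* Gaussian density with mean [m] and VARIANCE [v] (library's normal_pdf uses
   the standard deviation). *)
Definition gauss (m v x : R) : R := normal_pdf m (Num.sqrt v) x.

(* Density at [y] of one captured tile  Y = a + n^i + n^s  given X = l and the
   map tile y^l = m, where a ~ N(m, vi) (the model a | Y^l = m),
   n^i ~ N(0, vi), n^s ~ N(0, vs), all independent: the convolution of the
   three Gaussian densities. *)
Definition tile_density (m vi vs y : R) : R :=
  fine (\int[lebesgue_measure]_a \int[lebesgue_measure]_n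
          ((gauss m vi a * gauss 0 vi n * gauss 0 vs (y - a - n))%:E))%E.

Definition likelihood (Nw Nd L : nat) (sig2 N0 : R) (Atil : 'M[R]_(Nw, Nd))
    (y : 'M[R]_(Nw, Nd)) (ymap : 'I_L -> 'M[R]_(Nw, Nd)) (l : 'I_L) : R :=
  \prod_(k < Nw) \prod_(j < Nd)
     tile_density (ymap l k j) sig2 (N0 / Atil k j) (y k j).

Definition prior (L : nat) (l : 'I_L) : R := L%:R^-1.

(* Posterior Pr(X = l | Y = y, Y^l' = y^l', l' in [L]) by Bayes' rule; the
   map sections are independent of X, so their density cancels. *)
Definition posterior (Nw Nd L : nat) (sig2 N0 : R) (Atil : 'M[R]_(Nw, Nd))
    (y : 'M[R]_(Nw, Nd)) (ymap : 'I_L -> 'M[R]_(Nw, Nd)) (l : 'I_L) : R :=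
  prior l * likelihood sig2 N0 Atil y ymap l /
  \sum_(l' < L) prior l' * likelihood sig2 N0 Atil y ymap l'.

Definition match_cost (Nw Nd L : nat) (sig2 N0 : R) (Atil : 'M[R]_(Nw, Nd))
    (y : 'M[R]_(Nw, Nd)) (ymap : 'I_L -> 'M[R]_(Nw, Nd)) (l : 'I_L) : R :=
  \sum_(k < Nw) \sum_(j < Nd)
     (ymap l k j - y k j) ^+ 2 / (2 * sig2 + N0 / Atil k j).

End Model.

(* Main.v *)
Require Import Defs.
From HB Require Import structures.
From mathcomp Require Import all_boot all_order all_algebra.
From mathcomp Require Import all_classical all_reals all_analysis.
From mathcomp Require Import ring measurable_realfun.
Import Order.TTheory GRing.Theory Num.Theory.
Local Open Scope ring_scope.

Lemma aux1 (F : fieldType) (v1 v2 p : F) : v1 + v2 != 0 ->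
  v1 * p *+ 2 * (v2 * p *+ 2) = (v1 + v2) * p *+ 2 * (v1 * v2 / (v1 + v2) * p *+ 2).
Proof. move=> h. rewrite !mulr2n. field. exact: h. Qed.

Lemma aux2 (F : realFieldType) (m v1 v2 z x : F) : 0 < v1 -> 0 < v2 ->
 - (x - m) ^+ 2 / (v1 *+ 2) + - (z - x - 0) ^+ 2 / (v2 *+ 2) =
  - (z - m) ^+ 2 / ((v1 + v2) *+ 2) +
  - (x - (m * v2 + z * v1) / (v1 + v2)) ^+ 2 / (v1 * v2 / (v1 + v2) *+ 2).
Proof.
move=> h1 h2. have h3 : 0 < v1 + v2 by rewrite addr_gt0.
rewrite !mulr2n. field.
by rewrite !gt_eqF ?addr_gt0 ?mulr_gt0.
Qed.

Lemma aux3 (F : realFieldType) (a b s v : F) : 0 < s -> 0 < v ->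
  - (a - b) ^+ 2 / ((s + (s + v)) *+ 2) = (b - a) ^+ 2 / (2 * s + v) * - 2^-1.
Proof.
move=> h1 h2. rewrite -(opprB b a) sqrrN !mulr2n.
have h3 : 0 < s + (s + v) by rewrite !addr_gt0.
field. by rewrite !gt_eqF ?addr_gt0 ?mulr_gt0 ?ltr0n.
Qed.

Section S.
Variable R : realType.

Lemma gE (m v x : R) : 0 < v ->
  gauss m v x = (Num.sqrt (v * pi *+ 2))^-1 * expR (- (x - m) ^+ 2 / (v *+ 2)).
Proof.
move=> v0; rewrite /gauss normal_pdfE; last by rewrite gt_eqF // sqrtr_gt0.
by rewrite /normal_peak /normal_fun sqr_sqrtr // ltW.
Qed.

Lemma gprod (m v1 v2 z x : R) : 0 < v1 -> 0 < v2 ->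
  gauss m v1 x * gauss 0 v2 (z - x) =
  gauss m (v1 + v2) z * gauss ((m * v2 + z * v1) / (v1 + v2)) (v1 * v2 / (v1 + v2)) x.
Proof.
move=> h1 h2.
have h12 : 0 < v1 + v2 by rewrite addr_gt0.
have hv : 0 < v1 * v2 / (v1 + v2) by rewrite divr_gt0 // mulr_gt0.
rewrite !gE //.
have pi0 : 0 < pi :> R by exact: pi_gt0.
rewrite mulrACA [X in _ = X]mulrACA -!expRD -!invfM -!sqrtrM; last first.
  by rewrite mulrn_wge0 // mulr_ge0 // ltW.
  by rewrite mulrn_wge0 // mulr_ge0 // ltW.
congr (_ ^-1 * expR _).
  by congr Num.sqrt; apply: aux1; rewrite gt_eqF.
exact: aux2.
Qed.


Lemma conv (m v1 v2 z : R) : 0 < v1 -> 0 < v2 ->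
  (\int[lebesgue_measure]_x (gauss m v1 x * gauss 0 v2 (z - x))%:E = (gauss m (v1 + v2) z)%:E)%E.
Proof.
move=> h1 h2.
under eq_integral => x _ do rewrite gprod // EFinM.
rewrite ge0_integralZl //=.
- by rewrite /gauss integral_normal_pdf mule1.
- by apply/measurable_EFinP; exact: measurable_normal_pdf.
- by move=> x _; rewrite lee_fin normal_pdf_ge0.
- by rewrite lee_fin normal_pdf_ge0.
Qed.

Lemma tdE (m vi vs y : R) : 0 < vi -> 0 < vs ->
  tile_density m vi vs y = gauss m (vi + (vi + vs)) y.
Proof.
move=> h1 h2; rewrite /tile_density.
have inner : forall a, (\int[lebesgue_measure]_n
   ((gauss m vi a * gauss 0 vi n * gauss 0 vs (y - a - n))%:E) =
   (gauss m vi a)%:E * (gauss 0 (vi + vs) (y - a))%:E)%E.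
  move=> a.
  under eq_integral => n _ do rewrite -mulrA EFinM.
  rewrite ge0_integralZl //=.
  - by rewrite conv.
  - apply/measurable_EFinP; apply: measurable_funM.
      exact: measurable_normal_pdf.
    apply: (measurable_comp (F := setT)) => //; first exact: measurable_normal_pdf.
    by apply: measurable_funB => //; exact: measurable_cst.
  - by move=> x _; rewrite lee_fin mulr_ge0 // normal_pdf_ge0.
  - by rewrite lee_fin normal_pdf_ge0.
under eq_integral => a _ do rewrite inner -EFinM.
by rewrite conv // ?addr_gt0.
Qed.

End S.

Theorem proposition1 (R : realType) (Nw Nd L : nat)
    (hNw : (1 <= Nw)%N) (hNd : (1 <= Nd)%N) (hL : (1 <= L)%N)
    (sig2 N0 : R) (hsig : 0 < sig2) (hN0 : 0 < N0)
    (Atil : 'M[R]_(Nw, Nd)) (hA : forall k j, 0 < Atil k j)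
    (y : 'M[R]_(Nw, Nd)) (ymap : 'I_L -> 'M[R]_(Nw, Nd)) (l : 'I_L) :
  (forall l' : 'I_L,
      posterior sig2 N0 Atil y ymap l' <= posterior sig2 N0 Atil y ymap l)
  <->
  (forall l' : 'I_L,
      match_cost sig2 N0 Atil y ymap l <= match_cost sig2 N0 Atil y ymap l').
Proof.
have hvs : forall k j, 0 < N0 / Atil k j by move=> k j; rewrite divr_gt0.
pose c k j := (Num.sqrt ((sig2 + (sig2 + N0 / Atil k j)) * pi *+ 2))^-1.
pose P := \prod_(k < Nw) \prod_(j < Nd) c k j.
have hP : 0 < P.
  apply: prodr_gt0 => k _; apply: prodr_gt0 => j _.
  rewrite invr_gt0 sqrtr_gt0 pmulrn_lgt0 // mulr_gt0 ?pi_gt0 //.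
  by rewrite !addr_gt0.
have likE : forall l0, likelihood sig2 N0 Atil y ymap l0 =
    P * expR (match_cost sig2 N0 Atil y ymap l0 * - 2^-1).
  move=> l0; rewrite /likelihood /match_cost /P.
  rewrite big_distrl /=.
  under [X in _ = _ * expR X]eq_bigr => k _ do rewrite big_distrl /=.
  rewrite expR_sum.
  under [X in _ = _ * X]eq_bigr => k _ do rewrite expR_sum.
  rewrite -big_split /=.
  apply: eq_bigr => k _; rewrite -big_split /=.
  apply: eq_bigr => j _.
  by rewrite tdE // gE ?addr_gt0 // aux3.
have likpos : forall l0, 0 < likelihood sig2 N0 Atil y ymap l0.
  by move=> l0; rewrite likE mulr_gt0 // expR_gt0.
set S := \sum_(l' < L) prior l' * likelihood sig2 N0 Atil y ymap l'.
have hL0 : 0 < (L%:R : R)^-1 by rewrite invr_gt0 ltr0n.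
have hS : 0 < S.
  rewrite /S (bigD1 l) //=.
  apply: (lt_le_trans (_ : 0 < prior l * likelihood sig2 N0 Atil y ymap l)).
    by rewrite mulr_gt0.
  rewrite lerDl sumr_ge0 // => i _; rewrite ltW // mulr_gt0 //.
have key : forall l', (posterior sig2 N0 Atil y ymap l' <= posterior sig2 N0 Atil y ymap l)
   = (match_cost sig2 N0 Atil y ymap l <= match_cost sig2 N0 Atil y ymap l').
  move=> lp; rewrite /posterior -/S (ler_pM2r (_ : 0 < S^-1)); last by rewrite invr_gt0.
  rewrite /prior (ler_pM2l hL0) !likE (ler_pM2l hP) ler_expR.
  have h2 : - (2:R)^-1 < 0 by rewrite oppr_lt0 invr_gt0 ltr0n.
  by rewrite (ler_nM2r h2).
by split=> H l'; [rewrite -key | rewrite key].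
Qed.
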